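(* A matrix is a slack matrix of a polyhedral cone if and only if it is a slack matrix of some pointed polyhedral cone.
   Context: A matrix $S\in\mathbb{R}^{p\times q}$ is a slack matrix of a polyhedral cone $K\subseteq\mathbb{R}^n$ if there are $A\in\mathbb{R}^{p\times n}$, $B\in\mathbb{R}^{n\times q}$ with $K=\{x\in\mathbb{R}^n: x^TB\ge 0\}=\{y^TA: y\in\mathbb{R}_+^p\}$ and $S=AB$. A cone is pointed if its lineality space (the largest linear subspace it contains) is $\{0\}$. *)

(* Defs.v *)
From HB Require Import structures.
From mathcomp Require Import all_boot all_order all_algebra.
From mathcomp Require Import reals.
Set Implicit Arguments. Unset Strict Implicit. Unset Printing Implicit Defensive.
Import Order.TTheory GRing.Theory Num.Theory.
Local Open Scope ring_scope.

Definition slack_matrix_of (R : realType) (n p q : nat)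
    (K : 'rV[R]_n -> Prop) (S : 'M[R]_(p, q)) : Prop :=
  exists (A : 'M[R]_(p, n)) (B : 'M[R]_(n, q)),
    (forall x : 'rV[R]_n, K x <-> (forall j : 'I_q, 0 <= (x *m B) 0 j)) /\
    (forall x : 'rV[R]_n,
        K x <-> exists y : 'rV[R]_p, (forall i : 'I_p, 0 <= y 0 i) /\ x = y *m A) /\
    S = A *m B.

(* K is pointed: its lineality space (the largest linear subspace it
   contains) is {0}, i.e. every linear subspace (row space of a matrix U)
   contained in K is the zero subspace. *)
Definition pointed (R : realType) (n : nat) (K : 'rV[R]_n -> Prop) : Prop :=
  forall U : 'M[R]_n, (forall v : 'rV[R]_n, (v <= U)%MS -> K v) -> U = 0.

(* Main.v *)
Require Import Defs.
From HB Require Import structures.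
From mathcomp Require Import all_boot all_order all_algebra.
From mathcomp Require Import reals.
Import Order.TTheory GRing.Theory Num.Theory.
Local Open Scope ring_scope.

Theorem lemma2p10 (R : realType) (p q : nat) (S : 'M[R]_(p, q)) :
  (exists (n : nat) (K : 'rV[R]_n -> Prop), slack_matrix_of K S) <->
  (exists (n : nat) (K : 'rV[R]_n -> Prop), pointed K /\ slack_matrix_of K S).
Proof.
split; last by move=> [n [K [_ H]]]; exists n, K.
move=> [n [K [A [B [HB [HA ->]]]]]].
set C := col_base B. set D := row_base B.
have eB : C *m D = B by rewrite mulmx_base.
have /row_fullP [Ci hCi] := col_base_full B.
have /row_freeP [Di hDi] := row_base_free B.
exists (\rank B), (fun z => forall j, 0 <= (z *m D) 0 j).
split.
  move=> U hU; apply/matrixP => i j; rewrite mxE.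
  set v := row i U.
  have h1 := hU v (row_sub i U).
  have h2 := hU (- v) (eq_ind _ (fun w => (w <= U)%MS) (scalemx_sub (-1) (row_sub i U)) _ (scaleN1r _)).
  have vD : v *m D = 0.
    apply/matrixP => a b; rewrite (ord1 a) [in RHS]mxE.
    apply/eqP; rewrite eq_le (h1 b) andbT.
    by have := h2 b; rewrite mulNmx mxE oppr_ge0.
  have : v = 0 by rewrite -[v]mulmx1 -hDi mulmxA vD mul0mx.
  by move=> hv; have := congr1 (fun M : 'rV[R]_(\rank B) => M 0 j) hv; rewrite /v !mxE.
exists (A *m C), D; split; first by move=> x.
split; last by rewrite -mulmxA eB.
move=> z; split.
  move=> hz.
  have Kx : K (z *m Ci).
    apply/HB => j.
    have -> : z *m Ci *m B = z *m D.
      have e1 : z *m Ci *m B = z *m Ci *m (C *m D) by rewrite eB.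
      by rewrite e1 mulmxA -(mulmxA z) hCi mulmx1.
    exact: hz.
  have [y [hy ex]] := (proj1 (HA _)) Kx.
  exists y; split => //.
  by rewrite mulmxA -ex -mulmxA hCi mulmx1.
move=> [y [hy ->]] j.
have Kx : K (y *m A) by apply/HA; exists y.
have := (proj1 (HB _)) Kx j.
have e1 : y *m A *m B = y *m A *m (C *m D) by rewrite eB.
by rewrite e1 !mulmxA.
Qed.
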